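(* Let $\diamond$ be a weak independence on the analysis instance $\mathcal{D}$ and let $\prec_s$ be the size order. The feasible prefix $\mathcal{P}^{\prec_s}_{\mathcal{D},\diamond}$ of the unfolding $\mathcal{U}_{\mathcal{D},\diamond}$ is $\mathcal{D}$-complete.
   Context: An analysis instance $\mathcal{D}=\langle D,\sqsubseteq,F,d_0\rangle$ consists of a lattice $\langle D,\sqsubseteq,\sqcup,\sqcap\rangle$ with least element $\bot$, monotone bottom-strict transformers $F$, and initial element $d_0$. For $\sigma=f_1\ldots f_m$, $\mathrm{state}(\sigma)=(f_m\circ\cdots\circ f_1)(d_0)$; $\mathrm{reach}(\mathcal{D})$ is the set of reachable elements. A relation $\diamond\subseteq F\times F$ is a weak independence if it is symmetric, irreflexive, and $f\diamond f'$ implies $f(f'(d))=f'(f(d))$ for every $d\in\mathrm{reach}(\mathcal{D})$. A labelled prime event structure (PES) is $\langle E,<,\#,h\rangle$ with $<$ a strict partial order with finite down-sets, $\#$ a symmetric irreflexive conflict relation inherited along $<$, and a labelling $h$. A configuration is a finite causally closed, conflict-free set of events; $[e]=\{e'\colon e'<e\}\cup\{e\}$ is the local configuration of $e$. The interleavings $\mathrm{inter}(C)$ are the label sequences of linearizations of $C$ respecting $<$, and $\mathrm{state}(C)$ is the greatest lower bound (meet) in $D$ of $\{\mathrm{state}(\sigma)\colon\sigma\in\mathrm{inter}(C)\}$. The unfolding $\mathcal{U}_{\mathcal{D},\diamond}$ is obtained from the empty PES by repeatedly adding events $e=\langle f,C\rangle$ where $C$ is a configuration, $f$ is enabled (not yielding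 $\bot$) at $\mathrm{state}(C)$ and $\neg(f\diamond h(e'))$ for every $<$-maximal $e'\in C$, setting $e'<e$ for $e'\in C$, $e'\# e$ for other events $e'\notin C$ with $\neg(f\diamond h(e'))$, and $h(e)=f$, until saturation. Prefixes of a PES are sub-PESs closed under causal predecessors with the projected relations. A strategy is a strict partial order $\prec$ on finite configurations of $\mathcal{U}_{\mathcal{D},\diamond}$ with $C\subsetneq C'\Rightarrow C\prec C'$. An event $e$ is $\prec$-feasible if no causal predecessor of $e$ is a $\prec$-cutoff; a $\prec$-feasible event $e$ is a $\prec$-cutoff if there is a $\prec$-feasible event $e'$ with $[e']\prec[e]$ and $\mathrm{state}([e])\sqsubseteq\mathrm{state}([e'])$. The feasible prefix $\mathcal{P}^{\prec}_{\mathcal{D},\diamond}$ is the unique prefix of $\mathcal{U}_{\mathcal{D},\diamond}$ containing exactly the $\prec$-feasible events that are not $\prec$-cutoffs. The size order is $C\prec_s C'$ iff $|C|<|C'|$. A PES is $\mathcal{D}$-complete iff for every $d\in\mathrm{reach}(\mathcal{D})$ there is a configuration $C$ of it with $d\sqsubseteq\mathrm{state}(C)$. *)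

(* Defs.v *)
From HB Require Import structures.
From mathcomp Require Import all_boot all_order.

Set Implicit Arguments.
Unset Strict Implicit.
Unset Printing Implicit Defensive.

Import Order.TTheory.
Local Open Scope order_scope.

(* Events of the unfolding: an event <f, C> is a label f together with its  *)
(* (finite) set of causal predecessors C, represented as a duplicate-free    *)
(* list in canonical form (see [canonical_hist] below).                      *)

Inductive ev (Fn : Type) : Type := Ev : Fn -> seq (ev Fn) -> ev Fn.

Section EvChoice.
Variable Fn : choiceType.

Fixpoint ev_enc (e : ev Fn) : GenTree.tree Fn :=
  let: Ev f C := e in GenTree.Node 0 (GenTree.Leaf f :: map ev_enc C).

Fixpoint ev_dec (t : GenTree.tree Fn) : option (ev Fn) :=
  match t with
  | GenTree.Node 0 (GenTree.Leaf f :: ts) => Some (Ev f (pmap ev_dec ts))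
  | _ => None
  end.

Fixpoint ev_encK (e : ev Fn) : ev_dec (ev_enc e) = Some e :=
  match e return ev_dec (ev_enc e) = Some e with
  | Ev f C =>
    f_equal (fun C' => Some (Ev f C'))
      ((fix loop (C : seq (ev Fn)) : pmap ev_dec (map ev_enc C) = C :=
          match C return pmap ev_dec (map ev_enc C) = C with
          | [::] => erefl
          | e :: C' =>
            @eq_ind_r _ (Some e)
              (fun o => oapp (cons^~ (pmap ev_dec (map ev_enc C')))
                                 (pmap ev_dec (map ev_enc C')) o = e :: C')
              (f_equal (cons e) (loop C')) (ev_dec (ev_enc e)) (ev_encK e)
          end) C)
  end.

HB.instance Definition _ := Equality.copy (ev Fn) (pcan_type ev_encK).
HB.instance Definition _ := Choice.copy (ev Fn) (pcan_type ev_encK).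
End EvChoice.

Definition lab (Fn : Type) (e : ev Fn) : Fn := let: Ev f _ := e in f.
Definition hist (Fn : Type) (e : ev Fn) : seq (ev Fn) := let: Ev _ C := e in C.

Section Analysis.
Variables (disp : Order.disp_t) (D : bLatticeType disp).
Variables (Fn : choiceType) (app : Fn -> D -> D) (d0 : D).
Variable indep : Fn -> Fn -> Prop.

Definition run (s : seq Fn) : D := foldl (fun d f => app f d) d0 s.

Definition reach (d : D) : Prop := exists s : seq Fn, d = run s.

(* The analysis instance: monotone, bottom-strict transformers; F is a set,
   represented by the injective family [app]. *)
Definition analysis_instance : Prop :=
  injective app /\
  (forall f x y, x <= y -> app f x <= app f y) /\
  (forall f, app f \bot = \bot).

Definition weak_independence : Prop :=
  (forall f g, indep f g -> indep g f) /\
  (forall f, ~ indep f f) /\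
  (forall f g d, indep f g -> reach d -> app f (app g d) = app g (app f d)).

Local Notation event := (ev Fn).

Definition loc (e : event) : seq event := e :: hist e.

Fixpoint respects (C pre s : seq event) : bool :=
  match s with
  | [::] => true
  | e :: s' => all (fun p => (p \in C) ==> (p \in pre)) (hist e)
               && respects C (rcons pre e) s'
  end.

Definition inter (C : seq event) : seq (seq Fn) :=
  [seq map (@lab Fn) s | s <- permutations C & respects C [::] s].

Definition bigmeet (s : seq D) : D :=
  if s is x :: s' then foldl Order.meet x s' else \bot.

Definition stateC (C : seq event) : D := bigmeet (map run (inter C)).

Definition dconf (e e' : event) : Prop :=
  e' \notin loc e /\ e \notin loc e' /\ ~ indep (lab e) (lab e').
Definition conf (e1 e2 : event) : Prop :=
  exists2 a, a \in loc e1 & exists2 b, b \in loc e2 & dconf a b.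

Definition causally_closed (C : seq event) : Prop :=
  forall e, e \in C -> forall p, p \in hist e -> p \in C.
Definition conflict_free (C : seq event) : Prop :=
  forall e e', e \in C -> e' \in C -> ~ conf e e'.

Definition config_of (P : event -> Prop) (C : seq event) : Prop :=
  uniq C /\ (forall e, e \in C -> P e) /\ causally_closed C /\ conflict_free C.

Definition maximal_in (C : seq event) (e : event) : Prop :=
  e \in C /\ forall e'', e'' \in C -> e \notin hist e''.

(* The history list of an event is the canonical representative (chosen
   once and for all) of its permutation class, so that <f,C> is determined
   by f and the SET C. *)
Definition canonical_hist (C : seq event) : Prop := C = choose (perm_eq C) C.

Inductive inU : event -> Prop :=
| inU_ext (f : Fn) (C : seq event) :
    canonical_hist C ->
    uniq C ->
    (forall e, e \in C -> inU e) ->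
    causally_closed C ->
    conflict_free C ->
    app f (stateC C) != \bot ->
    (forall e', maximal_in C e' -> ~ indep f (lab e')) ->
    inU (Ev f C).

Definition size_order (C C' : seq event) : Prop := (size C < size C')%N.

(* The mutual recursive
   definition is well founded since every relevant event has a strictly
   smaller local configuration; [cutoff_upto n e] is the cutoff predicate for
   events with |[e]| <= n (the fuel n never changes the answer). *)
Definition feasible_wrt (cut : event -> Prop) (e : event) : Prop :=
  inU e /\ (forall p, p \in hist e -> ~ cut p).

Fixpoint cutoff_upto (n : nat) (e : event) : Prop :=
  match n with
  | 0 => False
  | m.+1 =>
    feasible_wrt (cutoff_upto m) e /\
    exists e', feasible_wrt (cutoff_upto m) e' /\
               size_order (loc e') (loc e) /\
               stateC (loc e) <= stateC (loc e')
  end.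

Definition cutoff (e : event) : Prop := cutoff_upto (size (loc e)) e.
Definition feasible (e : event) : Prop := feasible_wrt cutoff e.

Definition in_feasible_prefix (e : event) : Prop := feasible e /\ ~ cutoff e.

Definition D_complete (P : event -> Prop) : Prop :=
  forall d, reach d -> exists C, config_of P C /\ d <= stateC C.

End Analysis.

(* Main.v *)
Require Import Defs.
From HB Require Import structures.
From mathcomp Require Import all_boot all_order.
From Stdlib Require Import ClassicalEpsilon.

Set Implicit Arguments.
Unset Strict Implicit.
Unset Printing Implicit Defensive.
Import Order.TTheory.
Local Open Scope order_scope.

Section Ev.
Variable Fn : choiceType.
Local Notation event := (ev Fn).

Fixpoint evsz (e : event) : nat := let: Ev _ C := e in (sumn (map evsz C)).+1.

Lemma evsz_hist (x p : event) : p \in hist x -> (evsz p < evsz x)%N.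
Proof.
case: x => f C /=; rewrite ltnS.
elim: C => [|a C IH] //=; rewrite in_cons => /orP [/eqP -> | /IH]; first exact: leq_addr.
by move=> h; apply: leq_trans h (leq_addl _ _).
Qed.

Lemma notin_hist (x : event) : x \notin hist x.
Proof. by apply/negP => /evsz_hist; rewrite ltnn. Qed.

Lemma respects_mono (C pre pre' s : seq event) :
  respects C pre s -> {subset pre <= pre'} -> respects C pre' s.
Proof.
elim: s pre pre' => [|x s IH] pre pre' //= /andP [h1 h2] sub.
apply/andP; split.
  apply/allP => p hp; have := allP h1 p hp => /implyP h; apply/implyP => /h; exact: sub.
apply: IH h2 _ => y; rewrite !mem_rcons !in_cons => /orP [->//|/sub ->]; by rewrite orbT.
Qed.

Lemma respects_cat (C pre s1 s2 : seq event) :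
  respects C pre (s1 ++ s2) = respects C pre s1 && respects C (pre ++ s1) s2.
Proof.
elim: s1 pre => [|x s1 IH] pre /=; first by rewrite cats0.
by rewrite IH cat_rcons andbA.
Qed.

Lemma respects_mem (C pre s : seq event) x p :
  respects C pre s -> x \in s -> p \in hist x -> p \in C -> p \in pre ++ s.
Proof.
elim: s pre => [|y s IH] pre //= /andP [h1 h2]; rewrite in_cons => /orP [/eqP -> | xs] hp pC.
  by have := allP h1 p hp; rewrite pC /= mem_cat => ->.
by have := IH _ h2 xs hp pC; rewrite cat_rcons.
Qed.

Definition evle (x y : event) := (evsz x <= evsz y)%N.

Lemma evle_trans : transitive evle.
Proof. move=> x y z; exact: leq_trans. Qed.

Lemma respects_sorted (C pre l : seq event) :
  sorted evle l ->
  (forall x, x \in l -> forall p, p \in hist x -> p \in C -> p \in pre ++ l) ->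
  respects C pre l.
Proof.
elim: l pre => [|x l IH] pre //= hs hl; apply/andP; split.
  apply/allP => p hp; apply/implyP => pC.
  have := hl x (mem_head _ _) p hp pC; rewrite mem_cat in_cons => /orP [->//|/orP [/eqP e|pl]].
    by rewrite -e in hp; move: (notin_hist p); rewrite hp.
  have := allP (order_path_min evle_trans hs) p pl.
  by rewrite /evle leqNgt (evsz_hist hp).
apply: IH; first exact: path_sorted hs.
by move=> y yl p hp pC; rewrite cat_rcons; apply: hl hp pC; rewrite in_cons yl orbT.
Qed.

Definition lin (C : seq event) := sort evle C.

Lemma lin_sorted C : sorted evle (lin C).
Proof. apply: sort_sorted => x y; exact: leq_total. Qed.

Lemma lin_perm C : perm_eq (lin C) C.
Proof. exact: permEl (perm_sort _ _). Qed.

Lemma lin_respects C : causally_closed C -> respects C [::] (lin C).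
Proof.
move=> cc; apply: respects_sorted; first exact: lin_sorted.
by move=> x xl p hp _; rewrite /= (perm_mem (lin_perm C)); apply: cc hp; rewrite -(perm_mem (lin_perm C)).
Qed.

End Ev.
Section An.
Variables (disp : Order.disp_t) (D : bLatticeType disp).
Variables (Fn : choiceType) (app : Fn -> D -> D) (d0 : D).
Variable indep : Fn -> Fn -> Prop.
Hypothesis HA : analysis_instance app.
Hypothesis HW : weak_independence app d0 indep.
Local Notation event := (ev Fn).
Local Notation RUN := (run app d0).
Local Notation REACH := (reach app d0).

Definition runf (x : D) (s : seq Fn) := foldl (fun d f => app f d) x s.
Definition labs (s : seq event) := map (@lab Fn) s.

Lemma run_cat s t : RUN (s ++ t) = runf (RUN s) t.
Proof. by rewrite /run /runf foldl_cat. Qed.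

Lemma reach_runf x t : REACH x -> REACH (runf x t).
Proof. by case=> s ->; exists (s ++ t); rewrite run_cat. Qed.

Lemma reach_app x f : REACH x -> REACH (app f x).
Proof. by move=> rx; apply: (reach_runf [:: f] rx). Qed.

Lemma runf_mono x y t : x <= y -> runf x t <= runf y t.
Proof.
case: HA => _ [mono _].
by elim: t x y => [|g t IH] x y //= h; apply: IH; apply: mono.
Qed.

Lemma runf_bot t : runf \bot t = \bot.
Proof. case: HA => _ [_ bs]; by elim: t => [|g t IH] //=; rewrite /runf /= bs. Qed.

Lemma comm_past f x t : REACH x -> (forall g, g \in t -> indep f g) ->
  app f (runf x t) = runf (app f x) t.
Proof.
case: HW => _ [_ cm].
elim: t x => [|g t IH] x rx h //=.
rewrite /runf /= -/(runf _ t) IH; last first.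
  by move=> g' hg'; apply: h; rewrite in_cons hg' orbT.
  exact: reach_app.
rewrite cm //; last by apply: h; rewrite mem_head.
Qed.

Lemma lin_run_eq (C pre s1 s2 : seq event) x :
  conflict_free indep C -> {subset s1 <= C} -> uniq (pre ++ s1) ->
  perm_eq s1 s2 -> respects C pre s1 -> respects C pre s2 -> REACH x ->
  runf x (labs s1) = runf x (labs s2).
Proof.
elim: s1 pre s2 x => [|y s1 IH] pre s2 x cf sub u pe r1 r2 rx.
  by have := perm_size pe; case: s2 {pe r2}.
have ys2 : y \in s2 by rewrite -(perm_mem pe) mem_head.
case/splitPr: s2 / ys2 pe r2 => a b pe r2.
move: r1 => /= /andP [r1a r1b].
move: r2; rewrite respects_cat /= => /andP [ra /andP [_ rb]].
have u2 : uniq (a ++ y :: b) by rewrite -(perm_uniq pe); move: u; rewrite cat_uniq => /and3P [].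
have yC : y \in C by apply: sub; rewrite mem_head.
have yna : y \notin a by move: u2; rewrite cat_uniq => /and3P [_ /norP [] ].
have ind : forall g, g \in labs a -> indep (lab y) g.
  move=> g /mapP [z za ->].
  have zs : z \in y :: s1 by rewrite (perm_mem pe) mem_cat za.
  have zC : z \in C by apply: sub.
  have zy : z != y by apply/eqP => e; move: yna; rewrite -e za.
  have znh : z \notin hist y.
    apply/negP => zh; have := allP r1a z zh; rewrite zC /= => zpre.
    move: u; rewrite cat_uniq => /and3P [_ /hasP h _]; apply: h; by exists z.
  have ynh : y \notin hist z.
    apply/negP => yh; have := respects_mem ra za yh yC; rewrite mem_cat (negbTE yna) orbF => ypre.
    move: u; rewrite cat_uniq => /and3P [_ /hasP h _]; apply: h; exists y => //; exact: mem_head.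
  case: (Classical_Prop.classic (indep (lab y) (lab z))) => // h; exfalso.
  apply: (cf y z yC zC); exists y; first exact: mem_head.
  exists z; first exact: mem_head.
  split; first by rewrite /loc in_cons negb_or zy znh.
  split; first by rewrite /loc in_cons negb_or ynh andbT; apply/eqP => e; move: zy; rewrite e eqxx.
  exact: h.
rewrite /labs map_cat /= /runf foldl_cat /= -/(runf _ _) -/(labs a) comm_past //.
rewrite -/(runf _ (labs b)) /runf -foldl_cat -map_cat -/(labs (a ++ b)) -/(runf _ _).
apply: (IH (rcons pre y)) => //.
- by move=> z zs; apply: sub; rewrite in_cons zs orbT.
- by rewrite cat_rcons.
- by rewrite -(perm_cons y); apply: (perm_trans pe); rewrite -[y :: b]cat1s perm_catCA.
- rewrite respects_cat; apply/andP; split.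
    by apply: respects_mono ra _ => z; rewrite mem_rcons in_cons => ->; rewrite orbT.
  apply: respects_mono rb _ => z; rewrite mem_rcons in_cons !mem_cat mem_rcons in_cons.
  by case/orP => [->|/orP [->|->]]; rewrite ?orbT.
- exact: reach_app.
Qed.

Lemma bigmeet_le (l : seq D) v : v \in l -> bigmeet l <= v.
Proof.
case: l => [|y l] //=.
suff: forall y, foldl Order.meet y l <= y /\ forall w, w \in l -> foldl Order.meet y l <= w.
  move=> h; rewrite in_cons => /orP [/eqP ->|vl]; first by case: (h y).
  by case: (h y) => _; apply.
elim: l => [|z l IH] y0 /=; first by split.
case: (IH (y0 `&` z)) => h1 h2; split; first exact: le_trans h1 (leIl _ _).
move=> w; rewrite in_cons => /orP [/eqP ->|]; last exact: h2.
exact: le_trans h1 (leIr _ _).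
Qed.

Lemma bigmeet_const (l : seq D) v : v \in l -> (forall w, w \in l -> w = v) -> bigmeet l = v.
Proof.
case: l => [|y l] //= _ h.
have -> : y = v by apply: h; rewrite mem_head.
have : forall w, w \in l -> w = v by move=> w wl; apply: h; rewrite in_cons wl orbT.
elim: l {h} => [|z l IH] //= h; rewrite (h z (mem_head _ _)) meetxx; apply: IH.
by move=> w wl; apply: h; rewrite in_cons wl orbT.
Qed.

Lemma reach_d0 : REACH d0.
Proof. by exists [::]. Qed.

Lemma stateC_eq (C s : seq event) : uniq C -> conflict_free indep C ->
  perm_eq s C -> respects C [::] s -> stateC app d0 C = RUN (labs s).
Proof.
move=> uC cfC ps rs; apply: bigmeet_const.
  apply/mapP; exists (labs s) => //; apply/mapP; exists s => //.
  by rewrite mem_filter rs mem_permutations ps.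
move=> w /mapP [t /mapP [s' ]]; rewrite mem_filter mem_permutations => /andP [rs' ps'] -> ->.
apply: (@lin_run_eq C [::]) => //.
- by move=> z; rewrite (perm_mem ps').
- by rewrite /= (perm_uniq ps').
- by apply: (perm_trans ps'); rewrite perm_sym.
- exact: reach_d0.
Qed.

Lemma stateC_le (C s : seq event) : perm_eq s C -> respects C [::] s ->
  stateC app d0 C <= RUN (labs s).
Proof.
move=> ps rs; apply: bigmeet_le; apply/mapP; exists (labs s) => //; apply/mapP; exists s => //.
by rewrite mem_filter rs mem_permutations ps.
Qed.

Lemma cf_cons (C : seq event) e : conflict_free indep C -> causally_closed C ->
  {subset hist e <= C} -> (forall a, a \in C -> a \notin loc e -> indep (lab e) (lab a)) ->
  conflict_free indep (e :: C).
Proof.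
move=> cfC ccC he hind.
have cl : forall z, z \in e :: C -> forall a, a \in loc z -> a \in e :: C.
  move=> z; rewrite in_cons => /orP [/eqP -> | zC] a; rewrite /loc in_cons => /orP [/eqP ->|ah].
  - exact: mem_head.
  - by rewrite in_cons he ?orbT.
  - by rewrite in_cons zC orbT.
  - by rewrite in_cons (ccC z zC a ah) orbT.
move=> x y xin yin [a al [b bl [h1 [h2 h3]]]].
have := cl x xin a al; have := cl y yin b bl.
rewrite !in_cons => /orP [/eqP eb | bC] /orP [/eqP ea | aC].
- by move: h1; rewrite eb ea /loc mem_head.
- apply: h3; case: HW => sym _; apply: sym; rewrite eb; apply: hind => //; by rewrite -eb.
- by apply: h3; rewrite ea; apply: hind => //; rewrite -ea.
- apply: (cfC a b aC bC); exists a; first exact: mem_head.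
  exists b; first exact: mem_head.
  by split.
Qed.

Definition ib f g : bool := if excluded_middle_informative (indep f g) then true else false.
Lemma ibP f g : reflect (indep f g) (ib f g).
Proof. by rewrite /ib; case: excluded_middle_informative => h; constructor. Qed.

Lemma inU_inv e : inU app d0 indep e ->
  [/\ uniq (hist e), (forall x, x \in hist e -> inU app d0 indep x),
      causally_closed (hist e) & conflict_free indep (hist e)].
Proof. by case=> f C /= _ *; split. Qed.

Local Notation P := (in_feasible_prefix app d0 indep).

Lemma triv (s : seq Fn) : RUN s <= d0 ->
  exists C, config_of indep P C /\ (size C <= size s)%N /\ RUN s <= stateC app d0 C.
Proof.
move=> h; exists [::]; split; first by split=> //; split=> //; split.
split=> //; rewrite (@stateC_eq [::] [::]) //; by move=> ? ? .
Qed.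

Lemma main n : forall s : seq Fn, (size s <= n)%N ->
  exists C, config_of indep P C /\ (size C <= size s)%N /\ RUN s <= stateC app d0 C.
Proof.
have [_ [mono bs]] := HA.
have [isym [irr cm]] := HW.
elim: n => [|n IHn] s.
  by rewrite leqn0 => /nilP ->; apply: triv; rewrite lexx.
case/lastP: s => [|s' f] hs; first by apply: triv; rewrite lexx.
case: (eqVneq (RUN (rcons s' f)) \bot) => [e0|ne0].
  by apply: triv; rewrite e0 le0x.
have hs' : (size s' <= n)%N by move: hs; rewrite size_rcons.
have [C' [[uC' [PC' [ccC' cfC']]] [szC' leC']]] := IHn s' hs'.
have hrun : RUN (rcons s' f) = app f (RUN s') by rewrite -cats1 run_cat.
have inUC' : forall x, x \in C' -> inU app d0 indep x by move=> x /PC' [[]].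
set S := [seq a <- C' | ~~ ib f (lab a)].
set Hraw := [seq a <- C' | has (fun b => a \in loc b) S].
set H0 := choose (perm_eq Hraw) Hraw.
have pH : perm_eq H0 Hraw by rewrite perm_sym; exact: chooseP (perm_refl _).
have memH : forall a, (a \in H0) = (a \in C') && has (fun b => a \in loc b) S.
  by move=> a; rewrite (perm_mem pH) mem_filter andbC.
have subH : {subset H0 <= C'} by move=> a; rewrite memH => /andP [].
have SinH : forall b, b \in C' -> ~~ ib f (lab b) -> b \in H0.
  move=> b bC nb; rewrite memH bC andTb; apply/hasP.
  exists b; first by rewrite mem_filter nb bC.
  exact: mem_head.
have notH : forall a, a \in C' -> a \notin H0 -> indep f (lab a).
  move=> a aC aH; apply/ibP; apply/negPn/negP => nb; by move: aH; rewrite SinH.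
have ccH : causally_closed H0.
  move=> x; rewrite memH => /andP [xC /hasP [b bS xb]] p hp.
  have bC : b \in C' by move: bS; rewrite mem_filter => /andP [].
  have [_ _ ccb _] := inU_inv (inUC' b bC).
  have pb : p \in loc b.
    move: xb; rewrite /loc !in_cons => /orP [/eqP xe|xh]; first by rewrite -xe hp orbT.
    by rewrite (ccb x xh p hp) orbT.
  by rewrite memH (ccC' x xC p hp) /=; apply/hasP; exists b.
have uH : uniq H0 by rewrite (perm_uniq pH) filter_uniq.
have cfH : conflict_free indep H0 by move=> x y /subH xC /subH yC; apply: cfC'.
have canH : canonical_hist H0.
  rewrite /canonical_hist (eq_choose (permPl pH)).
  by rewrite {1}/H0; apply: choose_id => //; rewrite perm_sym.
have maxH : forall e', maximal_in H0 e' -> ~ indep f (lab e').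
  move=> x [xH hmax]; move: (xH); rewrite memH => /andP [xC /hasP [b bS xb]].
  have bC : b \in C' by move: bS; rewrite mem_filter => /andP [].
  have bH : b \in H0 by rewrite memH bC andTb; apply/hasP; exists b => //; exact: mem_head.
  move: xb; rewrite /loc in_cons (negbTE (hmax b bH)) orbF => /eqP ->.
  by move: bS; rewrite mem_filter => /andP [/ibP].
set sg := lin C'.
have psg : perm_eq sg C' := lin_perm C'.
have ssg := lin_sorted C'.
set lH := [seq x <- sg | x \in H0].
set lb := [seq x <- sg | x \notin H0].
have plH : perm_eq lH H0.
  apply: uniq_perm; first by rewrite filter_uniq // (perm_uniq psg).
    done.
  by move=> x; rewrite mem_filter (perm_mem psg); case xH: (x \in H0) => //=; rewrite subH.
have rlH : respects H0 [::] lH.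
  apply: respects_sorted; first exact: sorted_filter (@evle_trans Fn) _ _ ssg.
  by move=> x _ p _ pH0; rewrite /= (perm_mem plH).
have pC' : perm_eq (lH ++ lb) C'.
  apply: perm_trans psg; exact: permEl (perm_filterC (mem H0) sg).
have rC' : respects C' [::] (lH ++ lb).
  rewrite respects_cat; apply/andP; split.
    apply: respects_sorted; first exact: sorted_filter (@evle_trans Fn) _ _ ssg.
    move=> x; rewrite (perm_mem plH) => xH p hp _; by rewrite /= (perm_mem plH) (ccH x xH p hp).
  apply: respects_sorted; first exact: sorted_filter (@evle_trans Fn) _ _ ssg.
  move=> x _ p _ pC; rewrite /= mem_cat (perm_mem plH) mem_filter (perm_mem psg) pC andbT.
  by case: (p \in H0).
have stC' : stateC app d0 C' = RUN (labs (lH ++ lb)) by apply: stateC_eq.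
have indb : forall g, g \in labs lb -> indep f g.
  move=> g /mapP [x]; rewrite mem_filter (perm_mem psg) => /andP [xH xC] ->.
  exact: notH.
have key : app f (stateC app d0 C') = runf (app f (RUN (labs lH))) (labs lb).
  rewrite stC' /labs map_cat run_cat comm_past //; first by exists (labs lH).
have stH : stateC app d0 H0 = RUN (labs lH) by apply: stateC_eq.
have hle : RUN (rcons s' f) <= runf (app f (RUN (labs lH))) (labs lb).
  by rewrite hrun -key; apply: mono.
have enab : app f (stateC app d0 H0) != \bot.
  rewrite stH; apply/eqP => h0; move: hle; rewrite h0 runf_bot lex0 => /eqP h1.
  by move: ne0; rewrite h1 eqxx.
set e := Ev f H0.
have inUe : inU app d0 indep e.
  constructor => //; first by move=> x /subH; exact: inUC'.
have enotC : e \notin C'.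
  apply/negP => eC.
  have : e \in H0 by apply: SinH => //=; apply/negP => /ibP; exact: irr.
  by move: (notin_hist e) => /negP.
have cfC'' : conflict_free indep (e :: C').
  apply: cf_cons => //.
  move=> a aC; rewrite /loc in_cons negb_or => /andP [_ aH]; exact: notH.
have ccC'' : causally_closed (e :: C').
  move=> x; rewrite in_cons => /orP [/eqP -> | xC] p hp; rewrite in_cons.
    by rewrite subH ?orbT.
  by rewrite (ccC' x xC p hp) orbT.
have uC'' : uniq (e :: C') by rewrite /= enotC uC'.
have stC'' : stateC app d0 (e :: C') = app f (stateC app d0 C').
  rewrite (@stateC_eq (e :: C') (sg ++ [:: e])) //.
  - rewrite (@stateC_eq C' sg) //; last exact: lin_respects.
    by rewrite /labs map_cat run_cat.
  - by rewrite cats1 perm_rcons perm_cons.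
  rewrite respects_cat; apply/andP; split.
    apply: respects_sorted => // x; rewrite (perm_mem psg) => xC p hp _.
    by rewrite /= (perm_mem psg) (ccC' x xC p hp).
  rewrite /= andbT; apply/allP => p pH0; apply/implyP => _.
  by rewrite (perm_mem psg) subH.
case: (Classical_Prop.classic (cutoff app d0 indep e)) => hcut; last first.
  exists (e :: C'); split; last split.
  - split=> //; split; last by split.
    move=> x; rewrite in_cons => /orP [/eqP -> | ]; last exact: PC'.
    split=> //; split=> // p /subH pC; by case: (PC' p pC).
  - by rewrite size_rcons.
  - by rewrite stC'' hrun; apply: mono.
move: hcut; rewrite /cutoff /loc /= => [[_ [e' [[inUe' _] [szlt hst]]]]].
have stE : stateC app d0 (e :: H0) = app f (RUN (labs lH)).
  rewrite (@stateC_eq (e :: H0) (lH ++ [:: e])) //.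
  - by rewrite /labs map_cat run_cat.
  - by rewrite /= uH (notin_hist e).
  - move=> x y xin yin; apply: cfC''; [move: xin | move: yin];
      rewrite !in_cons => /orP [-> // | /subH ->]; by rewrite orbT.
  - by rewrite cats1 perm_rcons perm_cons.
  rewrite respects_cat; apply/andP; split.
    apply: respects_sorted; first exact: sorted_filter (@evle_trans Fn) _ _ ssg.
    by move=> x; rewrite (perm_mem plH) => xH p hp _; rewrite /= (perm_mem plH) (ccH x xH p hp).
  rewrite /= andbT; apply/allP => p pH0; apply/implyP => _.
  by rewrite (perm_mem plH).
have [_ _ cce' _] := inU_inv inUe'.
have cle' : causally_closed (e' :: hist e').
  move=> x; rewrite in_cons => /orP [/eqP -> | xh] p hp; rewrite in_cons.
    by rewrite hp orbT.
  by rewrite (cce' x xh p hp) orbT.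
have ste' := @stateC_le (e' :: hist e') (lin (e' :: hist e')) (lin_perm _) (lin_respects cle').
set s2 := labs (lin (e' :: hist e')) ++ labs lb.
have szH : (size lH + size lb)%N = size C' by rewrite -size_cat (perm_size pC').
have szs2 : (size s2 <= size C')%N.
  rewrite /s2 size_cat /labs !size_map (perm_size (lin_perm _)) -szH (perm_size plH) leq_add2r.
  by move: szlt; rewrite /size_order /loc /=.
have [C [cC [szC leC]]] := IHn s2 (leq_trans szs2 (leq_trans szC' hs')).
exists C; split=> //; split.
  by rewrite size_rcons; apply: leq_trans szC _; apply: leq_trans szs2 _; apply: leq_trans szC' _.
apply: le_trans hle _; apply: le_trans leC.
rewrite /s2 run_cat; apply: runf_mono.
apply: le_trans ste'; rewrite -stE.
by move: hst; rewrite /loc.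
Qed.


End An.

Theorem theorem6 (disp : Order.disp_t) (D : bLatticeType disp)
    (Fn : choiceType) (app : Fn -> D -> D) (d0 : D)
    (indep : Fn -> Fn -> Prop) :
  analysis_instance app ->
  weak_independence app d0 indep ->
  D_complete app d0 indep (in_feasible_prefix app d0 indep).
Proof.
move=> HA HW d [s ->].
have [C [cC [_ le]]] := @main disp D Fn app d0 indep HA HW (size s) s (leqnn _).
by exists C.
Qed.
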